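(* Let $n\ge4$ and let $D_0\subsetneq D_1\subsetneq\dots\subsetneq D_m$ be a chain of sets of pairwise noncrossing diagonals of $P_n$. Then the points $\Phi(D_0),\dots,\Phi(D_m)$ are affinely independent, so their convex hull $\Phi(\Delta)$ is an $m$-simplex. In particular, for a maximal chain (a full flag of faces of $K_{n-1}$, with $m=n-3$), the image is an $(n-3)$-simplex.
   Context: $P_n$ is a regular $n$-gon whose edges are labeled cyclically by a fixed circular ordering; two diagonals cross if they meet in the interior; $\mathcal D$ is the set of diagonals. Faces of the associahedron $K_{n-1}$ correspond to sets of pairwise noncrossing diagonals (face of $D$ contains face of $D'$ iff $D\subseteq D'$), and a chain of such sets corresponds to a flag of faces and to a simplex $\Delta$ of the barycentric subdivision of $K_{n-1}$. For a triangulation $T$, $\Phi(T)\in\mathbb R^{\mathcal D}$ has $d$-coordinate $1/(n-3)$ if $d\in T$ and $0$ otherwise; for a set $D$ of pairwise noncrossing diagonals, $\Phi(D)$ is the average of $\Phi(T)$ over triangulations $T\supseteq D$; $\Phi(\Delta)$ is the convex hull of the $\Phi(D_i)$. *)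

(* Defs.v *)
From HB Require Import structures.
From mathcomp Require Import all_boot all_order all_algebra.
Set Implicit Arguments. Unset Strict Implicit. Unset Printing Implicit Defensive.
Import Order.TTheory GRing.Theory Num.Theory.
Local Open Scope ring_scope.

(* Vertices of the regular n-gon P_n are 0, 1, ..., n-1 in cyclic order;
   the edges are {i, i+1} and {n-1, 0}.  A diagonal is an unordered pair of
   non-adjacent vertices, represented as (i, j) with i < j. *)
Definition is_diag (n : nat) (p : 'I_n * 'I_n) : bool :=
  [&& (p.1.+1 < p.2)%N & ~~ ((p.1 == 0%N :> nat) && (p.2 == n.-1 :> nat))].

Definition diag (n : nat) := {p : 'I_n * 'I_n | is_diag p}.

(* Two diagonals cross iff they meet in the interior of P_n, i.e. their
   endpoints strictly interleave along the boundary. *)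
Definition cross (n : nat) (d e : diag n) : bool :=
  let: (a, b) := val d in let: (c, f) := val e in
  [|| [&& (a < c)%N, (c < b)%N & (b < f)%N]
    | [&& (c < a)%N, (a < f)%N & (f < b)%N]].

Definition noncrossing (n : nat) (D : {set diag n}) : bool :=
  [forall d in D, forall e in D, ~~ cross d e].

Definition triangulation (n : nat) (T : {set diag n}) : bool :=
  noncrossing T && [forall d : diag n, noncrossing (d |: T) ==> (d \in T)].

Definition PhiT (R : fieldType) (n : nat) (T : {set diag n}) : {ffun diag n -> R^o} :=
  [ffun d => ((if d \in T then (n - 3)%:R^-1 else 0) : R^o)].

Definition Phi (R : fieldType) (n : nat) (D : {set diag n}) : {ffun diag n -> R^o} :=
  (#|[set T : {set diag n} | triangulation T & D \subset T]|%:R)^-1 *: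
    \sum_(T : {set diag n} | triangulation T && (D \subset T)) PhiT R T.

Definition affinely_independent (R : fieldType) (V : lmodType R) (m : nat)
    (x : 'I_m.+1 -> V) : Prop :=
  forall c : 'I_m.+1 -> R,
    \sum_(i < m.+1) c i = 0 -> \sum_(i < m.+1) c i *: x i = 0 ->
    forall i, c i = 0.

(* Main.v *)
Require Import Defs.
From HB Require Import structures.
From mathcomp Require Import all_boot all_order all_algebra zify.
Import Order.TTheory GRing.Theory Num.Theory.
Set Implicit Arguments. Unset Strict Implicit. Unset Printing Implicit Defensive.

Lemma noncrossingP n (D : {set diag n}) :
  reflect (forall g h, g \in D -> h \in D -> ~~ cross g h) (noncrossing D).
Proof.
apply: (iffP forallP) => [H g h gD hD | H g].
  by move: (H g); rewrite gD /= => /forallP/(_ h); rewrite hD.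
by apply/implyP => gD; apply/forall_inP => h hD; apply: H.
Qed.

Lemma noncrossingS n (D E : {set diag n}) : D \subset E -> noncrossing E -> noncrossing D.
Proof.
move=> /subsetP sDE /noncrossingP H; apply/noncrossingP => g h gD hD.
by apply: H; apply: sDE.
Qed.

Lemma exists_triang n (D : {set diag n}) : noncrossing D ->
  exists T, triangulation T && (D \subset T).
Proof.
move=> ncD.
pose P := fun T : {set diag n} => noncrossing T && (D \subset T).
have PD : P D by rewrite /P ncD subxx.
case: (@arg_maxnP _ D P (fun T : {set diag n} => #|T|) PD) => T /andP[ncT sDT] Tmax.
exists T; rewrite sDT andbT /triangulation ncT /=.
apply/forallP => d; apply/implyP => ncdT.
have := Tmax (d |: T); rewrite /P ncdT /= (subset_trans sDT (subsetUr _ _)).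
move=> /(_ isT); rewrite cardsU1; case: (d \in T) => //=.
by rewrite add1n ltnn.
Qed.

Lemma arg_ex (I : finType) (P : pred I) (i0 : I) (F : I -> nat) : P i0 ->
  exists x, P x /\ forall i, P i -> (F i <= F x)%N.
Proof. by move=> Pi0; case: (arg_maxnP F Pi0) => x Px H; exists x. Qed.
Definition crossb (a b c f : nat) : bool :=
  [|| [&& a < c, c < b & b < f] | [&& c < a, a < f & f < b]].

Ltac leaf1 c := exfalso; move/negP: c; apply; rewrite /crossb; lia.

Ltac leafs c1 x1 x2 y1 y2 :=
  solve [ leaf1 c1 | leaf1 x1 | leaf1 x2 | leaf1 y1 | leaf1 y2 | lia ].

Ltac bigleaf a b p q c1 x1 x2 y1 y2 :=
  case: (ltngtP p a) => ?; case: (ltngtP p b) => ?; case: (ltngtP q b) => ?;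
  leafs c1 x1 x2 y1 y2.

Lemma core1 (n a b X Y p q : nat) :
  p < q -> q < n -> Y < n ->
  a < X -> X < b -> b < Y ->
  ~~ crossb a b p q -> ~~ (p == a) || ~~ (q == b) ->
  (p = a -> q < b -> q <= X) ->
  (X = a.+1 \/ (~~ crossb a X p q /\ ~~ crossb p q a X)) ->
  (p = b -> q <= Y) -> (q = b -> p < a -> False) ->
  ((Y = b.+1) \/ (~~ crossb b Y p q /\ ~~ crossb p q b Y)) ->
  ~~ crossb X Y p q && ~~ crossb p q X Y.
Proof. move=> ? ? ? ? ? ? c1 ? ? Xf ? ? Yf.
apply/andP; split; apply/negP; rewrite {1}/crossb; case/orP=> /and3P[h1 h2 h3];
 (case: Xf => [?|[x1 x2]]); (case: Yf => [?|[y1 y2]]);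
 bigleaf a b p q c1 x1 x2 y1 y2.
Qed.

Lemma core2 (n a b X Y p q : nat) :
  p < q -> q < n -> 
  a < X -> X < b -> Y < a ->
  ~~ crossb a b p q -> ~~ (p == a) || ~~ (q == b) ->
  (p = a -> q < b -> q <= X) ->
  (X = a.+1 \/ (~~ crossb a X p q /\ ~~ crossb p q a X)) ->
  (q = b -> p < a -> p <= Y) ->
  ((b.+1 = n /\ Y = 0) \/ (~~ crossb Y b p q /\ ~~ crossb p q Y b)) ->
  ~~ crossb Y X p q && ~~ crossb p q Y X.
Proof. move=> ? ? ? ? ? c1 ? ? Xf ? Yf.
apply/andP; split; apply/negP; rewrite {1}/crossb; case/orP=> /and3P[h1 h2 h3];
 (case: Xf => [?|[x1 x2]]); (case: Yf => [[? ?]|[y1 y2]]);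
 bigleaf a b p q c1 x1 x2 y1 y2.
Qed.
Lemma crossE n (g h : diag n) :
  cross g h = crossb (val g).1 (val g).2 (val h).1 (val h).2.
Proof. by case: g => [[p q] ?]; case: h => [[r s] ?]. Qed.

Lemma cross_irr n (g : diag n) : ~~ cross g g.
Proof. by rewrite crossE /crossb; lia. Qed.

Lemma diag_lt n (g : diag n) : (val g).1 < (val g).2.
Proof. by case: g => [[p q]]; rewrite /is_diag /= => /andP[? _]; lia. Qed.

Lemma find_e n (D : {set diag n}) (d : diag n) : noncrossing (d |: D) -> d \notin D ->
  exists e : diag n, noncrossing (e |: D) && cross d e.
Proof.
move=> /noncrossingP ncd dnD.
have ncD g h : g \in D -> h \in D -> ~~ cross g h.
  by move=> gD hD; apply: ncd; rewrite !inE ?gD ?hD orbT.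
have dh h : h \in D -> ~~ cross d h && ~~ cross h d.
  by move=> hD; rewrite !ncd // !inE ?hD ?eqxx ?orbT.
have hdd h : h \in D -> ~~ ((val h).1 == (val d).1 :> nat) || ~~ ((val h).2 == (val d).2 :> nat).
  move=> hD; rewrite -negb_and; apply/negP => /andP[/eqP e1 /eqP e2].
  have : h = d by apply: val_inj; case: (val h) e1 e2 => ? ? /= /val_inj -> /val_inj ->; case: (val d).
  by move=> hd; move: dnD; rewrite -hd hD.
have Hd := valP d; rewrite /is_diag in Hd.
move: Hd ncd dh hdd; case E: (val d) => [a b] /= /andP[Hab Hab2] ncd dh hdd.
have n_gt0 : (0 < n)%N by apply: leq_ltn_trans (ltn_ord a).
have ha1 : (a.+1 < n)%N by apply: ltn_trans Hab (ltn_ord b).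
pose X0 := Ordinal ha1.
pose PX := fun i : 'I_n => (i == X0) || [&& a < i, i < b & [exists g in D, val g == (a, i)]].
have PX0 : PX X0 by rewrite /PX eqxx.
have [X [PXX Xmax]] := @arg_ex _ PX X0 (fun i : 'I_n => nat_of_ord i) PX0.
have [aX Xb Xf0] : [/\ a < X, X < b & (X = a.+1 :> nat) \/ exists2 g, g \in D & val g = (a, X)].
  case/orP: PXX => [/eqP -> /=|/and3P[h1 h2 /existsP[g /andP[gD /eqP ge]]]].
    by split => //; left.
  by split => //; right; exists g.
pose Y0 := Ordinal (ltn_pmod b.+1 n_gt0).
pose pos := fun i : 'I_n => if (b < i)%N then (i - b)%N else (i + n - b)%N.
pose PY := fun i : 'I_n => (i == Y0) || [&& (i < a) || (b < i) &
   [exists g in D, (val g == (i, b)) || (val g == (b, i))]].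
have PY0 : PY Y0 by rewrite /PY eqxx.
have [Y [PYY Ymax]] := @arg_ex _ PY Y0 pos PY0.
have Y0v : (Y0 : nat) = (if (b.+1 < n)%N then b.+1 else 0%N).
  rewrite /= ; case: ifP => h; first by rewrite modn_small.
  have -> : b.+1 = n by have := ltn_ord b; lia.
  by rewrite modnn.
have [Yout Yf0] : ((Y < a) || (b < Y))%N /\ ((Y : nat) = Y0 \/ exists2 g, g \in D & (val g = (Y, b) \/ val g = (b, Y))).
  case/orP: PYY => [/eqP ->|/andP[h1 /existsP[g /andP[gD ge]]]].
    split; last by left.
    rewrite Y0v; case: ifP => h; first by lia.
    by move: Hab2; have := ltn_ord b; lia.
  split => //; right; exists g => //.
  by case/orP: ge => /eqP; [left|right].
have Xf h : h \in D -> (X = a.+1 :> nat) \/ (~~ crossb a X (val h).1 (val h).2 /\ ~~ crossb (val h).1 (val h).2 a X).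
  move=> hD; case: Xf0 => [?|[g gD ge]]; [by left | right].
  by have := ncD g h gD hD; have := ncD h g hD gD; rewrite !crossE ge.
have Xm h : h \in D -> (val h).1 = a :> nat -> ((val h).2 < b)%N -> ((val h).2 <= X)%N.
  move=> hD e1 e2; apply: (Xmax (val h).2); rewrite /PX; apply/orP; right.
  rewrite e2 /=; have := diag_lt h; rewrite e1 => -> /=.
  apply/existsP; exists h; rewrite hD /=; apply/eqP.
  by rewrite [val h]surjective_pairing; congr pair; apply: val_inj.
have c1 h : h \in D -> ~~ crossb a b (val h).1 (val h).2.
  by move=> hD; move: (dh h hD) => /andP[]; rewrite crossE E.
have PYr h : h \in D -> (val h).1 = b :> nat -> PY (val h).2.
  move=> hD e1; rewrite /PY; apply/orP; right; have := diag_lt h; rewrite e1 => ->; rewrite orbT /=.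
  apply/existsP; exists h; rewrite hD /=; apply/orP; right; apply/eqP.
  by rewrite [val h]surjective_pairing; congr pair; apply: val_inj.
have PYl h : h \in D -> (val h).2 = b :> nat -> ((val h).1 < a)%N -> PY (val h).1.
  move=> hD e1 e2; rewrite /PY; apply/orP; right; rewrite e2 /=.
  apply/existsP; exists h; rewrite hD /=; apply/orP; left; apply/eqP.
  by rewrite [val h]surjective_pairing; congr pair; apply: val_inj.
case: (ltnP b Y) => hbY.
  have He : is_diag (X, Y) by rewrite /is_diag /=; apply/andP; split; lia.
  pose e := exist (@is_diag n) (X, Y) He : diag n.
  have key h : h \in D -> ~~ cross e h && ~~ cross h e.
    move=> hD; rewrite !crossE /=.
    apply: (core1 (diag_lt h) (ltn_ord _) (ltn_ord _) aX Xb hbY (c1 h hD) (hdd h hD) (Xm h hD) (Xf h hD)).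
    - move=> e1; have := Ymax _ (PYr h hD e1); rewrite /pos; move: e1 => /= e1 H.
      have H2 := diag_lt h; move: H; clear -H2 e1 hbY; case: ifP; case: ifP; lia.
    - move=> e1 e2; have := Ymax _ (PYl h hD e1 e2); rewrite /pos; move: e1 e2 => /= e1 e2 H.
      have H2 := ltn_ord Y; move: H; clear -H2 e1 e2 hbY Hab; case: ifP; case: ifP; lia.
    - case: Yf0 => [YY0|[g gD [ge|ge]]].
      + by left; move: YY0; rewrite Y0v; clear -hbY; case: ifP; lia.
      + by have := diag_lt g; rewrite ge /= => H; clear -H hbY; lia.
      + by right; have := ncD g h gD hD; have := ncD h g hD gD; rewrite !crossE ge.
  exists e; apply/andP; split.
    apply/noncrossingP => g h; case/setU1P => [->|gD]; case/setU1P => [->|hD].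
    - exact: cross_irr.
    - by case/andP: (key h hD).
    - by case/andP: (key g gD).
    - exact: ncD.
  by rewrite crossE E /crossb /=; lia.
have Ya : (Y < a)%N by move: Yout; lia.
have He : is_diag (Y, X) by rewrite /is_diag /=; apply/andP; split; have := ltn_ord b; lia.
pose e := exist (@is_diag n) (Y, X) He : diag n.
have key h : h \in D -> ~~ cross e h && ~~ cross h e.
  move=> hD; rewrite !crossE /=.
  apply: (core2 (diag_lt h) (ltn_ord _) aX Xb Ya (c1 h hD) (hdd h hD) (Xm h hD) (Xf h hD)).
  - move=> e1 e2; have := Ymax _ (PYl h hD e1 e2); rewrite /pos; move: e1 e2 => /= e1 e2 H.
    have H2 := ltn_ord b; move: H; clear -H2 e1 e2 Ya Hab; case: ifP; case: ifP; lia.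
  - case: Yf0 => [YY0|[g gD [ge|ge]]].
    + by left; move: YY0; rewrite Y0v; have := ltn_ord b; clear -Ya Hab; case: ifP; lia.
    + by right; have := ncD g h gD hD; have := ncD h g hD gD; rewrite !crossE ge.
    + by have := diag_lt g; rewrite ge /= => H; clear -H Ya Hab; lia.
exists e; apply/andP; split.
  apply/noncrossingP => g h; case/setU1P => [->|gD]; case/setU1P => [->|hD].
  - exact: cross_irr.
  - by case/andP: (key h hD).
  - by case/andP: (key g gD).
  - exact: ncD.
by rewrite crossE E /crossb /=; lia.
Qed.
Local Open Scope ring_scope.

Lemma PhiE (R : fieldType) n (D : {set diag n}) d :
  Phi R D d = (#|[set T : {set diag n} | triangulation T & D \subset T]|%:R)^-1 *
    \sum_(T in [set T : {set diag n} | triangulation T & D \subset T])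
       (if d \in T then (n - 3)%:R^-1 else 0).
Proof.
rewrite /Phi /GRing.scale /= ffunE sum_ffunE; congr (_ * _).
by apply: eq_big => [T|T _]; rewrite ?inE // ffunE.
Qed.

Lemma escape n (D : {set diag n}) d : noncrossing D -> d \notin D ->
  exists2 T, (T \in [set T : {set diag n} | triangulation T & D \subset T]) & d \notin T.
Proof.
move=> ncD dnD.
have tri_nc (T : {set diag n}) : triangulation T -> noncrossing T by case/andP.
case: (boolP (noncrossing (d |: D))) => ncdD.
  have [e /andP[nce cde]] := find_e ncdD dnD.
  have [T /andP[tT sT]] := exists_triang nce.
  exists T; first by rewrite inE tT (subset_trans (subsetU1 e D) sT).
  apply/negP => dT; have eT : e \in T by apply: (subsetP sT); rewrite setU11.
  by move/noncrossingP: (tri_nc T tT) => /(_ d e dT eT); rewrite cde.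
have [T /andP[tT sT]] := exists_triang ncD.
exists T; first by rewrite inE tT sT.
apply/negP => dT; move/negP: ncdD; apply; apply: (noncrossingS _ (tri_nc T tT)).
by apply/subsetP => x; case/setU1P => [->|/(subsetP sT)].
Qed.

Lemma Phi_in (R : numFieldType) n (D : {set diag n}) d :
  noncrossing D -> d \in D -> Phi R D d = (n - 3)%:R^-1.
Proof.
move=> ncD dD; rewrite PhiE.
set S := [set T : {set diag n} | _ & _].
have [T0 /andP[tT0 sT0]] := exists_triang ncD.
have N0 : (#|S|%:R : R) != 0.
  by rewrite pnatr_eq0 -lt0n; apply/card_gt0P; exists T0; rewrite inE tT0 sT0.
have N0' : (#|S|%:R : R^o) != 0 := N0.
rewrite (eq_bigr (fun _ => (n - 3)%:R^-1)) ?sumr_const.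
  by rewrite -[(n - 3)%:R^-1 *+ _]mulr_natr mulrC (mulfK N0').
by move=> T; rewrite inE => /andP[_ /subsetP/(_ d dD) ->].
Qed.

Lemma Phi_out (R : numFieldType) n (D : {set diag n}) d : (4 <= n)%N ->
  noncrossing D -> d \notin D -> Phi R D d != (n - 3)%:R^-1.
Proof.
move=> n4 ncD dnD; apply/eqP; rewrite PhiE.
set S := [set T : {set diag n} | _ & _].
have [T0 S0 dT0] := escape ncD dnD.
have N0 : (#|S|%:R : R) != 0.
  by rewrite pnatr_eq0 -lt0n; apply/card_gt0P; exists T0.
have N0' : (#|S|%:R : R^o) != 0 := N0.
have t0 : (0 : R) < (n - 3)%:R^-1 by rewrite invr_gt0 ltr0n subn_gt0.
set s := \sum_(T in S) _ => H.
have Hs : s = (n - 3)%:R^-1 * #|S|%:R by rewrite -H mulrAC (mulVf N0') mul1r.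
have Hz : \sum_(T in S) ((n - 3)%:R^-1 - (if d \in T then (n - 3)%:R^-1 else 0)) = 0 :> R.
  by rewrite sumrB sumr_const -/s Hs mulr_natr subrr.
have nn T : T \in S -> (0:R) <= (n - 3)%:R^-1 - (if d \in T then (n - 3)%:R^-1 else 0).
  by move=> _; case: ifP => _; rewrite ?subrr ?subr0 // ltW.
have := psumr_eq0P nn Hz S0; rewrite (negbTE dT0) subr0 => t00.
by move: t0; rewrite t00 ltxx.
Qed.

Lemma scale_ffunE (R : numFieldType) (T : finType) (a : R) (f : {ffun T -> R^o}) x :
  (a *: f) x = a * f x.
Proof. by rewrite /GRing.scale /= ffunE. Qed.

Unset Implicit Arguments.
Set Strict Implicit.
Theorem lemma16 (R : realFieldType) (n m : nat) (hn : (4 <= n)%N)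
    (D : 'I_m.+1 -> {set diag n})
    (hnc : forall i, noncrossing (D i))
    (hchain : forall i j : 'I_m.+1, (i < j)%N -> D i \proper D j) :
  affinely_independent (fun i => Phi R (D i)).
Proof.
move=> c sc0 scx.
have sub (i j : 'I_m.+1) : (i <= j)%N -> D i \subset D j.
  rewrite leq_eqVlt => /orP[/eqP/val_inj -> //|/hchain/properP[]//].
have H k : (k < m)%N -> forall i : 'I_m.+1, (i : nat) = k -> c i = 0.
  elim/ltn_ind: k => k IH km i ik.
  have km1 : (k.+1 < m.+1)%N by [].
  pose j := Ordinal km1.
  have ij : (i < j)%N by rewrite ik.
  have /properP[_ [d dj dni]] := hchain i j ij.
  have := congr1 (fun f : {ffun diag n -> R^o} => f d) scx; rewrite sum_ffunE ffunE /=.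
  under eq_bigr do rewrite scale_ffunE.
  move=> s1.
  have s2 : \sum_(l < m.+1) c l * (Phi R (D l) d - (n - 3)%:R^-1) = 0.
    under eq_bigr do rewrite mulrBr.
    by rewrite sumrB s1 -mulr_suml sc0 mul0r subrr.
  rewrite (bigD1 i) //= big1 ?addr0 in s2.
    move/eqP: s2; rewrite mulf_eq0 subr_eq0 (negbTE (Phi_out R hn (hnc i) dni)) orbF.
    by move/eqP.
  move=> l li.
  case: (ltngtP l i) => hl.
  - have lk : (l < k)%N by rewrite -ik.
    by rewrite (IH l lk (ltn_trans lk km) l erefl) mul0r.
  - rewrite Phi_in ?subrr ?mulr0 //.
    by apply: (subsetP (sub j l _)) => //=; rewrite -ik.
  - by move: li; rewrite (val_inj hl) eqxx.
move=> i; case: (ltnP i m) => im; first exact: (H i im).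
have im' : (i : nat) = m by have := ltn_ord i; lia.
move: sc0; rewrite (bigD1 i) //= big1 ?addr0 // => l li.
apply: (H l) => //; have := ltn_ord l; move: li; rewrite -val_eqE /= im'; lia.
Qed.
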